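(* Let $0<q<1$, $q^*=2-q$, and define $\eta(x)=\exp_{q^*}(-x)$ for $x\ge0$ and $\eta(x)=1$ for $x\le0$. Let $X_1,\dots,X_n$ be i.i.d. random variables with probability density $f(x)=[\exp_{q^*}(-x)]^{q^*}$ for $x>0$ and $f(x)=0$ for $x<0$ (so that $\mathrm{Prob}(X_k\ge x)=\eta(x)$), and let $\eta_n(x)=\mathrm{Prob}\left(\frac1n\sum_{k=1}^nX_k\ge x\right)$. Then for all $x>0$, $$1-[1-\eta(nx)]^n\le\eta_n(x).$$
   Context: For $q\in(0,2)$, $q\ne1$, the $q$-deformed exponential is $\exp_q(u)=[1+(1-q)u]_+^{1/(1-q)}$ for real $u$, where $[u]_+=\max(u,0)$. *)

(* Defs.v *)
From HB Require Import structures.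
From mathcomp Require Import all_boot all_order all_algebra.
From mathcomp Require Import all_classical all_reals all_analysis.
Set Implicit Arguments. Unset Strict Implicit. Unset Printing Implicit Defensive.
Import Order.TTheory GRing.Theory Num.Theory.
Local Open Scope classical_set_scope.
Local Open Scope ring_scope.

Definition expq {R : realType} (q u : R) : R :=
  powR (Num.max (1 + (1 - q) * u) 0) (1 / (1 - q)).

Definition qeta {R : realType} (q x : R) : R :=
  if x <= 0 then 1 else expq (2 - q) (- x).

Definition qpdf {R : realType} (q x : R) : R :=
  if 0 < x then powR (expq (2 - q) (- x)) (2 - q) else 0.

Definition mutually_independent {d} {T : measurableType d} {R : realType}
  (P : probability T R) (n : nat) (X : 'I_n -> {RV P >-> R}) : Prop :=
  forall B : 'I_n -> set R, (forall i, measurable (B i)) ->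
    P (\bigcap_(i in [set: 'I_n]) (X i @^-1` B i)) =
    (\prod_(i < n) P (X i @^-1` B i))%E.

Definition has_density {d} {T : measurableType d} {R : realType}
  (P : probability T R) (X : {RV P >-> R}) (g : R -> R) : Prop :=
  forall A : set R, measurable A ->
    distribution P X A = (\int[lebesgue_measure]_(y in A) (g y)%:E)%E.

(* Main.v *)
Require Import Defs.
From HB Require Import structures.
From mathcomp Require Import all_boot all_order all_algebra.
From mathcomp Require Import all_classical all_reals all_analysis.
From mathcomp Require Import measurable_realfun ring lra.
Import Order.TTheory GRing.Theory Num.Theory.
Local Open Scope classical_set_scope.
Local Open Scope ring_scope.
Lemma deriv_aff {R : realType} (a e y : R) : 0 < 1 + a * y ->
  is_derive y 1 (fun z => (1 + a * z) `^ e) (e * (1 + a * y) `^ (e - 1) * a).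
Proof.
move=> hy.
have dh : is_derive y 1 (fun z : R => 1 + a * z) a.
  by apply: is_derive_eq; rewrite add0r mul1r; exact: mulr1.
have dg := is_derive1_powR e hy.
split.
  apply/derivable1_diffP.
  have := @differentiable_comp _ _ _ _ (fun z : R => 1 + a * z) (@powR R ^~ e) y.
  apply.
    by apply/derivable1_diffP; case: dh.
  by apply/derivable1_diffP; case: dg.
rewrite -derive1E (@derive1_comp _ (fun z : R => 1 + a * z) (@powR R ^~ e)).
- by rewrite !derive1E (@derive_val _ _ _ _ _ _ _ dg) (@derive_val _ _ _ _ _ _ _ dh).
- by case: dh.
- by case: dg.
Qed.
Lemma derivF {R : realType} (a y : R) : 0 < a -> 0 < 1 + a * y ->
  is_derive y 1 (fun z => - (1 + a * z) `^ (- a^-1)) ((1 + a * y) `^ (- a^-1 - 1)).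
Proof.
move=> a0 hy.
have H := @deriv_aff R a (- a^-1) y hy.
have H2 := @is_deriveN _ _ _ _ _ _ _ H.
have -> : (1 + a * y) `^ (- a^-1 - 1) = - (- a^-1 * (1 + a * y) `^ (- a^-1 - 1) * a).
  by rewrite !mulNr opprK mulrAC mulVf ?gt_eqF // mul1r.
exact: H2.
Qed.
Lemma integ_g {R : realType} (a t : R) : 0 < a -> 0 < t ->
  (\int[lebesgue_measure]_(y in `[0%R, t]) ((1 + a * y) `^ (- a^-1 - 1))%:E =
   (1 - (1 + a * t) `^ (- a^-1))%:E)%E.
Proof.
move=> a0 t0.
have pos y : 0 <= y -> 0 < 1 + a * y.
  by move=> y0; rewrite ltr_wpDr // mulr_ge0 // ltW.
set F := fun z => - (1 + a * z) `^ (- a^-1).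
rewrite (@continuous_FTC2 _ _ F) //.
- by rewrite /F mulr0 addr0 powR1 -EFinB opprK addrC.
- have := @derivable_within_continuous R R (fun y => (1 + a * y) `^ (- a^-1 - 1)) `[0, t]%R.
  apply => y; rewrite in_itv /= => /andP[y0 _].
  by case: (@deriv_aff R a (- a^-1 - 1) y (pos y y0)).
- split.
  + move=> y; rewrite in_itv /= => /andP[y0 _].
    by case: (derivF a y a0 (pos y (ltW y0))).
  + apply: cvg_at_right_filter.
    apply: differentiable_continuous; apply/derivable1_diffP.
    by case: (derivF a 0 a0 (pos 0 (lexx 0))).
  + apply: cvg_at_left_filter.
    apply: differentiable_continuous; apply/derivable1_diffP.
    by case: (derivF a t a0 (pos t (ltW t0))).
- move=> y; rewrite in_itv /= => /andP[y0 _].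
  by rewrite derive1E (@derive_val _ _ _ _ _ _ _ (derivF a y a0 (pos y (ltW y0)))).
Qed.
Lemma expq_eq {R : realType} (q y : R) : q < 1 -> 0 <= y ->
  expq (2 - q) (- y) = (1 + (1 - q) * y) `^ (- (1 - q)^-1).
Proof.
move=> q1 y0.
have a0 : 0 < 1 - q by rewrite subr_gt0.
have p : 0 < 1 + (1 - q) * y by rewrite ltr_wpDr // mulr_ge0 // ltW.
rewrite /expq.
have -> : 1 + (1 - (2 - q)) * - y = 1 + (1 - q) * y by ring.
rewrite max_l ?ltW //.
congr (_ `^ _).
have -> : 1 - (2 - q) = - (1 - q) by ring.
by rewrite div1r invrN.
Qed.

Lemma qpdf_eq {R : realType} (q y : R) : q < 1 -> 0 < y ->
  qpdf q y = (1 + (1 - q) * y) `^ (- (1 - q)^-1 - 1).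
Proof.
move=> q1 y0.
have a0 : 0 < 1 - q by rewrite subr_gt0.
rewrite /qpdf y0 expq_eq // ?ltW // -powRrM; congr (_ `^ _).
have -> : 2 - q = 1 + (1 - q) by ring.
by rewrite mulrDr mulr1 mulNr mulVf ?gt_eqF.
Qed.

Lemma qeta_eq {R : realType} (q t : R) : q < 1 -> 0 < t ->
  qeta q t = (1 + (1 - q) * t) `^ (- (1 - q)^-1).
Proof.
by move=> q1 t0; rewrite /qeta leNgt t0 /= expq_eq // ltW.
Qed.
Lemma mg {R : realType} (a e : R) :
  measurable_fun [set: R] (fun y : R => ((1 + a * y) `^ e)%:E).
Proof.
apply/measurable_EFinP.
apply: (@measurableT_comp _ _ _ _ _ _ (@powR R ^~ e) _ (fun y : R => 1 + a * y)).
  exact: measurable_powR.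
by apply: measurable_funD => //; apply: measurable_funM.
Qed.

Lemma cdf {d} {T : measurableType d} {R : realType} (P : probability T R)
  (q : R) (X : {RV P >-> R}) : q < 1 -> has_density X (qpdf q) ->
  forall t, 0 < t -> P (X @^-1` `]-oo, t[) = (1 - qeta q t)%:E.
Proof.
move=> q1 hX t t0.
have a0 : 0 < 1 - q by rewrite subr_gt0.
have := hX _ (measurable_itv `]-oo, t[).
rewrite /distribution /pushforward => ->.
rewrite qeta_eq // -integ_g //.
set g := fun y : R => ((1 + (1 - q) * y) `^ (- (1 - q)^-1 - 1))%:E.
transitivity (\int[lebesgue_measure]_(y in `]0%R, t[) g y)%E.
  rewrite [LHS]integral_mkcond [RHS]integral_mkcond; apply: eq_integral => y _; rewrite !patchE.
  rewrite !mem_setE /= !in_itv /=.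
  have [y0|y0] := leP y 0.
    have -> : qpdf q y = 0 by rewrite /qpdf (ltNge 0 y) y0.
    by case: (y < t).
  by rewrite qpdf_eq.
rewrite integral_itv_obnd_cbnd; last exact: measurable_funTS (mg _ _).
rewrite integral_itv_bndo_bndc //; exact: measurable_funTS (mg _ _).
Qed.

Lemma cdf0 {d} {T : measurableType d} {R : realType} (P : probability T R)
  (q : R) (X : {RV P >-> R}) : has_density X (qpdf q) ->
  P (X @^-1` `]-oo, 0[) = 0%E.
Proof.
move=> hX.
have := hX _ (measurable_itv `]-oo, 0[).
rewrite /distribution /pushforward => ->.
apply: integral0_eq => y; rewrite /= in_itv /= => y0.
by rewrite /qpdf ltNge ltW.
Qed.

Theorem proposition5 (d : measure_display) (T : measurableType d)
  (R : realType) (P : probability T R) (q : R) (n : nat)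
  (X : 'I_n -> {RV P >-> R}) :
  0 < q < 1 -> (0 < n)%N ->
  mutually_independent X ->
  (forall i, has_density (X i) (qpdf q)) ->
  forall x : R, 0 < x ->
    ((1 - (1 - qeta q (n%:R * x)) ^+ n)%:E <=
     P [set w | (x <= n%:R^-1 * \sum_(k < n) X k w)%R])%E.
Proof.
move=> /andP[q0 q1] n0 hind hX x x0.
set t := n%:R * x.
have n0' : 0 < n%:R :> R by rewrite ltr0n.
have t0 : 0 < t by rewrite mulr_gt0.
set C := \bigcap_(i in [set: 'I_n]) (X i @^-1` `]-oo, t[).
set N := \bigcap_(i in [set: 'I_n]) (X i @^-1` `[0, +oo[).
set E := [set w | (x <= n%:R^-1 * \sum_(k < n) X k w)%R].
have mC : measurable C.
  by apply: fin_bigcap_measurable => [|i _]; [exact: finite_finset | exact: measurable_funPTI].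
have mN : measurable N.
  by apply: fin_bigcap_measurable => [|i _]; [exact: finite_finset | exact: measurable_funPTI].
have mE : measurable E.
  have mf : measurable_fun [set: T] (fun w => n%:R^-1 * \sum_(k < n) X k w).
    apply: measurable_funM => //; apply: measurable_sum => i.
    exact: measurable_funP.
  have := mf measurableT _ (measurable_itv `[x, +oo[).
  rewrite setTI; congr measurable; apply/seteqP; split => w /=; rewrite in_itv /= andbT //.
have PC : P C = ((1 - qeta q t) ^+ n)%:E.
  rewrite /C hind; last by move=> i; exact: measurable_itv.
  under eq_bigr => i _ do rewrite (@cdf _ _ _ P q (X i) q1 (hX i) t t0).
  by rewrite prodEFin prodr_const card_ord.
have PN : P N = 1%E.
  rewrite /N hind; last by move=> i; exact: measurable_itv.
  rewrite big1 // => i _.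
  have -> : X i @^-1` `[0, +oo[ = ~` (X i @^-1` `]-oo, 0[).
    apply/seteqP; split => w /=; rewrite !in_itv /= andbT.
      by move=> h; apply/negP; rewrite -leNgt.
    by move/negP; rewrite -leNgt.
  by rewrite probability_setC ?(@cdf0 _ _ _ P q (X i) (hX i)) ?sube0 //; exact: measurable_funPTI.
have sub : ~` C `&` N `<=` E.
  move=> w [nC hN]; rewrite /E /=.
  have [i Hi] : exists i, t <= X i w.
    apply: contrapT => H; apply: nC => i _ /=; rewrite in_itv /= ltNge.
    by apply/negP => h; apply: H; exists i.
  rewrite ler_pdivlMl // -/t; apply: (le_trans Hi).
  rewrite (bigD1 i) //= lerDl; apply: sumr_ge0 => j _.
  by have := hN j I; rewrite /= in_itv /= andbT.
have P0 : P (~` C `\` N) = 0%E.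
  apply/eqP; rewrite eq_le measure_ge0 andbT.
  apply: (@le_trans _ _ (P (~` N))).
    apply: le_measure; [rewrite inE; apply: measurableD => //; exact: measurableC | rewrite inE; exact: measurableC | by move=> w []].
  by rewrite probability_setC // PN subee.
apply: (@le_trans _ _ (P (~` C `&` N))); last first.
  by apply: le_measure; rewrite ?inE //; apply: measurableI => //; exact: measurableC.
have h : P (~` C) = (P (~` C `\` N) + P (~` C `&` N))%E.
  exact: measureDI (measurableC mC) mN.
rewrite P0 add0e in h; rewrite -h.
by rewrite probability_setC // PC.
Qed.
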